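(* Let $\lambda\ge 0$ and let $\varphi(z)=1+B_1z+B_2z^2+B_3z^3+\cdots$ be analytic in $\mathbb{D}$ with $B_1>0$ and $B_2\in\mathbb{R}$. Let $f(z)=z+\sum_{n\ge2}a_nz^n$ belong to $\sigma$, with inverse $F=f^{-1}$ on $\mathbb{D}$, and suppose \[(1-\lambda)\frac{f(z)}{z}+\lambda f'(z)\prec\varphi(z)\quad\text{and}\quad (1-\lambda)\frac{F(w)}{w}+\lambda F'(w)\prec\varphi(w).\] (That is, $f\in\mathcal{R}_\sigma(\lambda,\varphi)$.) Then \[|a_2|\le\sqrt{\frac{B_1+|B_1-B_2|}{1+2\lambda}}.\]
   Context: $\mathbb{D}=\{z\in\mathbb{C}:|z|<1\}$. $\mathcal{A}$ denotes the class of analytic functions $f$ on $\mathbb{D}$ with $f(0)=0$, $f'(0)=1$, i.e. $f(z)=z+\sum_{n\ge2}a_nz^n$. The class $\sigma$ of bi-univalent functions consists of those $f\in\mathcal{A}$ that are univalent in $\mathbb{D}$ and whose inverse $f^{-1}$ (defined near $0$) extends to a univalent analytic function $F$ on $\mathbb{D}$; then $F(w)=w-a_2w^2+(2a_2^2-a_3)w^3+\cdots$. For analytic $g,h$ on $\mathbb{D}$, $g\prec h$ (subordination) means there is an analytic $\omega:\mathbb{D}\to\mathbb{D}$ with $\omega(0)=0$ and $g=h\circ\omega$ (equivalently $|\omega(z)|\le|z|$). *)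

(* Defs.v *)
From Stdlib Require Import Reals.
Open Scope R_scope.

Definition Cx : Type := (R * R)%type.
Definition RtoC (x : R) : Cx := (x, 0).
Definition Cx0 : Cx := (0, 0).
Definition Cx1 : Cx := (1, 0).
Definition Cadd (z w : Cx) : Cx := (fst z + fst w, snd z + snd w).
Definition Copp (z : Cx) : Cx := (- fst z, - snd z).
Definition Csub (z w : Cx) : Cx := Cadd z (Copp w).
Definition Cmul (z w : Cx) : Cx :=
  (fst z * fst w - snd z * snd w, fst z * snd w + snd z * fst w).
Definition Cinv (z : Cx) : Cx :=
  (fst z / (fst z ^ 2 + snd z ^ 2), - snd z / (fst z ^ 2 + snd z ^ 2)).
Definition Cdiv (z w : Cx) : Cx := Cmul z (Cinv w).
Fixpoint Cpow (z : Cx) (n : nat) : Cx :=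
  match n with O => Cx1 | S m => Cmul z (Cpow z m) end.
Definition Cmod (z : Cx) : R := sqrt (fst z ^ 2 + snd z ^ 2).

Definition Ceq_dec (z w : Cx) : {z = w} + {z <> w}.
Proof.
  destruct z as [x y], w as [u v].
  destruct (Req_dec_T x u) as [H1|H1]; [destruct (Req_dec_T y v) as [H2|H2]|].
  - left; subst; reflexivity.
  - right; intro H; inversion H; contradiction.
  - right; intro H; inversion H; contradiction.
Defined.

Fixpoint Cpartial (a : nat -> Cx) (z : Cx) (N : nat) : Cx :=
  match N with
  | O => Cmul (a O) (Cpow z O)
  | S n => Cadd (Cpartial a z n) (Cmul (a (S n)) (Cpow z (S n)))
  end.

Definition ps_sum (a : nat -> Cx) (z s : Cx) : Prop :=
  Un_cv (fun N => fst (Cpartial a z N)) (fst s) /\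
  Un_cv (fun N => snd (Cpartial a z N)) (snd s).

Definition ps_on_disk (a : nat -> Cx) (f : Cx -> Cx) : Prop :=
  forall z, Cmod z < 1 -> ps_sum a z (f z).

Definition analytic_on_disk (f : Cx -> Cx) : Prop := exists a, ps_on_disk a f.

Definition C_deriv_at (f : Cx -> Cx) (z l : Cx) : Prop :=
  forall eps, eps > 0 -> exists delta, delta > 0 /\
    forall h, h <> Cx0 -> Cmod h < delta ->
      Cmod (Csub (Cdiv (Csub (f (Cadd z h)) (f z)) h) l) < eps.

Definition univalent_on_disk (f : Cx -> Cx) : Prop :=
  analytic_on_disk f /\
  forall z w, Cmod z < 1 -> Cmod w < 1 -> f z = f w -> z = w.

Definition subordinate (g h : Cx -> Cx) : Prop :=
  exists om : Cx -> Cx, analytic_on_disk om /\ om Cx0 = Cx0 /\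
    (forall z, Cmod z < 1 -> Cmod (om z) < 1) /\
    (forall z, Cmod z < 1 -> g z = h (om z)).

(* f(z)/z, extended analytically at 0 by f'(0) *)
Definition divz (f f' : Cx -> Cx) (z : Cx) : Cx :=
  if Ceq_dec z Cx0 then f' Cx0 else Cdiv (f z) z.

Definition Rlam_op (lam : R) (f f' : Cx -> Cx) (z : Cx) : Cx :=
  Cadd (Cmul (RtoC (1 - lam)) (divz f f' z)) (Cmul (RtoC lam) (f' z)).

Definition in_class_A (a : nat -> Cx) (f : Cx -> Cx) : Prop :=
  ps_on_disk a f /\ a O = Cx0 /\ a 1%nat = Cx1.

(* f in sigma, and F is the univalent extension to D of f^{-1} *)
Definition bi_univalent_with_inverse (a : nat -> Cx) (f F : Cx -> Cx) : Prop :=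
  in_class_A a f /\ univalent_on_disk f /\ univalent_on_disk F /\
  exists r, r > 0 /\ forall w, Cmod w < r -> Cmod (F w) < 1 /\ f (F w) = w.

(* Main.v *)
Require Import Defs.
From Stdlib Require Import Reals Lra Lia.
From Coquelicot Require Import Coquelicot.
Open Scope R_scope.

Ltac ceq := match goal with |- @eq _ ?x ?y => change (@eq C x y) end.
Ltac cring := ceq; ring.
Lemma e_add (x y : Cx) : Cadd x y = (x + y)%C. Proof. reflexivity. Qed.
Lemma e_mul (x y : Cx) : Cmul x y = (x * y)%C. Proof. reflexivity. Qed.
Lemma e_opp (x : Cx) : Defs.Copp x = (- x)%C. Proof. reflexivity. Qed.
Lemma e_sub (x y : Cx) : Csub x y = (x - y)%C. Proof. reflexivity. Qed.
Lemma e_div (x y : Cx) : Defs.Cdiv x y = (x / y)%C. Proof. reflexivity. Qed.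
Lemma e_mod (x : Cx) : Defs.Cmod x = Cmod x. Proof. reflexivity. Qed.
Lemma e_one : Cx1 = RtoC 1. Proof. reflexivity. Qed.
Lemma e_zero : Cx0 = RtoC 0. Proof. reflexivity. Qed.
Lemma e_RtoC (x : R) : Defs.RtoC x = RtoC x. Proof. reflexivity. Qed.
Lemma e_pow (x : Cx) n : Defs.Cpow x n = (x ^ n)%C.
Proof. induction n; simpl; [reflexivity| rewrite IHn; reflexivity]. Qed.

Lemma Cpartial_0 (e : nat -> C) (z : C) : Cpartial e z 0 = e 0%nat.
Proof. change (@eq C (Cmul (e 0%nat) Cx1) (e 0%nat)). rewrite e_mul, e_one. ring. Qed.
Lemma Cpartial_S (e : nat -> C) (z : C) n : Cpartial e z (S n) = (Cpartial e z n + e (S n) * z ^ (S n))%C.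
Proof. simpl Cpartial. rewrite e_add, e_mul, e_pow. reflexivity. Qed.

Lemma Cmod_le_abs (x y : R) : Cmod (x, y) <= Rabs x + Rabs y.
Proof.
  unfold Cmod; simpl. apply Rsqr_incr_0_var.
  - rewrite Rsqr_sqrt by nra. unfold Rsqr.
    pose proof (Rabs_pos x); pose proof (Rabs_pos y).
    replace (x*(x*1) + y*(y*1)) with (Rabs x * Rabs x + Rabs y * Rabs y).
    nra. rewrite <- !Rabs_mult. rewrite !Rabs_right by nra. ring.
  - pose proof (Rabs_pos x); pose proof (Rabs_pos y); lra.
Qed.

Lemma cv_Cmod_le (s : nat -> C) (l c : C) (b : R) (N0 : nat) :
  Un_cv (fun N => fst (s N)) (fst l) -> Un_cv (fun N => snd (s N)) (snd l) ->
  (forall N, (N0 <= N)%nat -> Cmod (s N - c)%C <= b) -> Cmod (l - c)%C <= b.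
Proof.
  intros H1 H2 Hb. destruct (Rle_dec (Cmod (l - c)%C) b) as [h|h]; auto.
  exfalso. set (eps := (Cmod (l - c)%C - b) / 2).
  assert (Heps : eps > 0) by (unfold eps; lra).
  destruct (H1 eps Heps) as [N1 HN1]. destruct (H2 eps Heps) as [N2 HN2].
  set (N := (N0 + N1 + N2)%nat).
  specialize (HN1 N ltac:(unfold N; lia)). specialize (HN2 N ltac:(unfold N; lia)).
  specialize (Hb N ltac:(unfold N; lia)). unfold R_dist in *.
  assert (Cmod (l - c)%C <= Cmod (l - s N)%C + Cmod (s N - c)%C).
  { replace (l - c)%C with ((l - s N) + (s N - c))%C by ring. apply Cmod_triangle. }
  assert (Cmod (l - s N)%C <= Rabs (fst (s N) - fst l) + Rabs (snd (s N) - snd l)).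
  { destruct l as [l1 l2]; destruct (s N) as [s1 s2]. simpl.
    replace ((l1, l2) - (s1, s2))%C with ((l1 - s1), (l2 - s2))%R.
    2:{ unfold Cminus, Cplus, Copp; simpl. f_equal; ring. }
    eapply Rle_trans. apply Cmod_le_abs.
    rewrite (Rabs_minus_sym l1), (Rabs_minus_sym l2). lra. }
  apply Rnot_le_lt in h. unfold eps in *. lra.
Qed.

Lemma ps_sum_unique (a : nat -> C) (z s1 s2 : C) : ps_sum a z s1 -> ps_sum a z s2 -> s1 = s2.
Proof.
  intros [h1 h2] [k1 k2]. destruct s1, s2; simpl in *.
  f_equal; eapply UL_sequence; eauto.
Qed.

Lemma ps_at0 (e : nat -> C) (g : C -> C) : ps_on_disk e g -> g 0%C = e 0%nat.
Proof.
  intros H. assert (Hz : Cmod 0%C < 1) by (rewrite Cmod_0; lra).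
  specialize (H _ Hz). eapply ps_sum_unique; [exact H|].
  assert (HP : forall N, Cpartial e (RtoC 0) N = e 0%nat).
  { induction N. apply Cpartial_0. rewrite Cpartial_S, IHN. simpl. cring. }
  split; simpl; intros eps Heps; exists 0%nat; intros; rewrite HP; unfold R_dist;
  rewrite Rminus_diag, Rabs_R0; lra.
Qed.

Lemma bounded_prefix (u : nat -> R) N0 : exists M, forall n, (n < N0)%nat -> Rabs (u n) <= M.
Proof.
  induction N0. exists 0; intros; lia.
  destruct IHN0 as [M HM]. exists (Rmax M (Rabs (u N0))). intros n Hn.
  destruct (Nat.eq_dec n N0). subst; apply Rmax_r.
  eapply Rle_trans; [apply HM; lia| apply Rmax_l].
Qed.

Lemma cv_bounded (u : nat -> R) l : Un_cv u l -> exists M, forall n, Rabs (u n) <= M.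
Proof.
  intros H. destruct (H 1 ltac:(lra)) as [N HN].
  destruct (bounded_prefix u N) as [M HM].
  exists (Rmax M (Rabs l + 1)). intros n. destruct (Compare_dec.le_lt_dec N n).
  - specialize (HN n ltac:(lia)). unfold R_dist in HN.
    eapply Rle_trans; [|apply Rmax_r].
    pose proof (Rabs_triang_inv (u n) l). lra.
  - eapply Rle_trans; [apply HM; lia|apply Rmax_l].
Qed.

Lemma coef_bound (e : nat -> C) (g : C -> C) s : ps_on_disk e g -> 0 <= s < 1 ->
  exists M, 0 <= M /\ forall n, Cmod (e n) * s ^ n <= M.
Proof.
  intros H Hs. assert (Hz : Cmod (RtoC s) < 1) by (rewrite Cmod_R, Rabs_right; lra).
  destruct (H _ Hz) as [H1 H2].
  destruct (cv_bounded _ _ H1) as [M1 HM1]. destruct (cv_bounded _ _ H2) as [M2 HM2].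
  exists (2*M1 + 2*M2). split.
  { pose proof (Rabs_pos (fst (Cpartial e (RtoC s) 0))); pose proof (HM1 0%nat).
    pose proof (Rabs_pos (snd (Cpartial e (RtoC s) 0))); pose proof (HM2 0%nat). lra. }
  intros n. replace (Cmod (e n) * s ^ n) with (Cmod (e n * RtoC s ^ n)%C).
  2:{ rewrite Cmod_mult, Cmod_pow, Cmod_R, Rabs_right; lra. }
  destruct n.
  - rewrite <- (Cpartial_0 e s). simpl (RtoC s ^ 0)%C. 
    rewrite Cmult_1_r.
    destruct (Cpartial e (RtoC s) 0) as [x y] eqn:E. eapply Rle_trans. apply Cmod_le_abs.
    pose proof (HM1 0%nat); pose proof (HM2 0%nat). rewrite E in *; simpl in *.
    pose proof (Rabs_pos x). pose proof (Rabs_pos y). 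
    lra.
  - replace (e (S n) * RtoC s ^ S n)%C with (Cpartial e (RtoC s) (S n) - Cpartial e (RtoC s) n)%C
      by (rewrite Cpartial_S; cring).
    destruct (Cpartial e (RtoC s) (S n)) as [x y] eqn:E1. destruct (Cpartial e (RtoC s) n) as [x' y'] eqn:E2.
    replace ((x, y) - (x', y'))%C with ((x - x'), (y - y'))%R
      by (unfold Cminus, Cplus, Copp; simpl; f_equal; ring).
    eapply Rle_trans. apply Cmod_le_abs.
    pose proof (HM1 (S n)); pose proof (HM2 (S n)); pose proof (HM1 n); pose proof (HM2 n).
    rewrite E1, E2 in *; simpl in *.
    pose proof (Rabs_triang x (-x')). pose proof (Rabs_triang y (-y')).
    rewrite Rabs_Ropp in *. unfold Rminus. lra.
Qed.

Lemma partial_diff_bound (e : nat -> C) (z : C) s q M K : 0 < s -> 0 <= q < 1 ->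
  Cmod z <= q * s -> (forall n, Cmod (e n) * s ^ n <= M) -> 0 <= M ->
  forall d, Cmod (Cpartial e z (K + d) - Cpartial e z K)%C <=
            M * (q ^ (S K) - q ^ (S (K + d))) * / (1 - q).
Proof.
  intros Hs Hq Hz HM HM0 d. induction d.
  - rewrite Nat.add_0_r. replace (Cpartial e z K - Cpartial e z K)%C with (RtoC 0) by cring.
    rewrite Cmod_0, Rminus_diag, Rmult_0_r, Rmult_0_l. lra.
  - replace (K + S d)%nat with (S (K + d)) by lia. rewrite Cpartial_S.
    set (N := (K + d)%nat) in *.
    replace (Cpartial e z N + e (S N) * z ^ S N - Cpartial e z K)%C with
      ((Cpartial e z N - Cpartial e z K) + e (S N) * z ^ S N)%C by cring.
    eapply Rle_trans. apply Cmod_triangle.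
    assert (Cmod (e (S N) * z ^ S N)%C <= M * q ^ S N).
    { rewrite Cmod_mult, Cmod_pow.
      assert (Cmod z ^ S N <= (q * s) ^ S N).
      { apply pow_incr. split; [apply Cmod_ge_0|exact Hz]. }
      rewrite Rpow_mult_distr in H.
      pose proof (HM (S N)). pose proof (Cmod_ge_0 (e (S N))).
      pose proof (pow_le q (S N) ltac:(lra)).
      pose proof (pow_le s (S N) ltac:(lra)).
      nra. }
    assert (M * (q ^ S K - q ^ S N) * / (1 - q) + M * q ^ S N =
            M * (q ^ S K - q ^ S (S N)) * / (1 - q)).
    { change (q ^ S (S N)) with (q * q ^ S N). field. lra. }
    lra.
Qed.

Lemma tail_bound (e : nat -> C) (g : C -> C) (z : C) s q M K :
  ps_on_disk e g -> Cmod z < 1 -> 0 < s -> 0 <= q < 1 ->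
  Cmod z <= q * s -> (forall n, Cmod (e n) * s ^ n <= M) -> 0 <= M ->
  Cmod (g z - Cpartial e z K)%C <= M * q ^ (S K) * / (1 - q).
Proof.
  intros Hps Hz1 Hs Hq Hz HM HM0. destruct (Hps z Hz1) as [H1 H2].
  apply (cv_Cmod_le (fun N => Cpartial e z N) (g z) (Cpartial e z K) _ K H1 H2).
  intros N HN. replace N with (K + (N - K))%nat by lia.
  eapply Rle_trans. apply (partial_diff_bound e z s q M K); auto.
  assert (0 < / (1 - q)) by (apply Rinv_0_lt_compat; lra).
  pose proof (pow_le q (S (K + (N - K))) ltac:(lra)).
  assert (M * (q ^ S K - q ^ S (K + (N - K))) <= M * q ^ S K) by nra.
  apply Rmult_le_compat_r; lra.
Qed.

Definition bigO (k : nat) (h : C -> C) : Prop :=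
  exists d K, 0 < d /\ 0 <= K /\ forall z : C, Cmod z < d -> Cmod (h z) <= K * Cmod z ^ k.

Lemma bigO_ext k (h1 h2 : C -> C) d0 : 0 < d0 -> (forall z, Cmod z < d0 -> h1 z = h2 z) ->
  bigO k h1 -> bigO k h2.
Proof.
  intros Hd0 He [d [K [Hd [HK H]]]]. exists (Rmin d d0), K. split; [apply Rmin_pos; lra|].
  split; auto. intros z Hz. rewrite <- He by (eapply Rlt_le_trans; [exact Hz|apply Rmin_r]).
  apply H. eapply Rlt_le_trans; [exact Hz|apply Rmin_l].
Qed.

Lemma bigO_add k (h1 h2 : C -> C) : bigO k h1 -> bigO k h2 -> bigO k (fun z => h1 z + h2 z)%C.
Proof.
  intros [d1 [K1 [Hd1 [HK1 H1]]]] [d2 [K2 [Hd2 [HK2 H2]]]].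
  exists (Rmin d1 d2), (K1 + K2). split; [apply Rmin_pos; lra|]. split; [lra|].
  intros z Hz. eapply Rle_trans. apply Cmod_triangle.
  pose proof (H1 z ltac:(eapply Rlt_le_trans; [exact Hz|apply Rmin_l])).
  pose proof (H2 z ltac:(eapply Rlt_le_trans; [exact Hz|apply Rmin_r])). lra.
Qed.

Lemma bigO_scal k (c : C) (h : C -> C) : bigO k h -> bigO k (fun z => c * h z)%C.
Proof.
  intros [d [K [Hd [HK H]]]]. exists d, (Cmod c * K). split; auto. split.
  apply Rmult_le_pos; auto; apply Cmod_ge_0.
  intros z Hz. rewrite Cmod_mult. rewrite Rmult_assoc. apply Rmult_le_compat_l.
  apply Cmod_ge_0. auto.
Qed.

Lemma bigO_opp k (h : C -> C) : bigO k h -> bigO k (fun z => - h z)%C.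
Proof.
  intros H. apply (bigO_ext k (fun z => (- 1) * h z)%C _ 1); [lra| |].
  intros; ring. apply bigO_scal; auto.
Qed.

Lemma bigO_sub k (h1 h2 : C -> C) : bigO k h1 -> bigO k h2 -> bigO k (fun z => h1 z - h2 z)%C.
Proof. intros; apply bigO_add; auto; apply bigO_opp; auto. Qed.

Lemma bigO_mul j k (h1 h2 : C -> C) : bigO j h1 -> bigO k h2 -> bigO (j + k) (fun z => h1 z * h2 z)%C.
Proof.
  intros [d1 [K1 [Hd1 [HK1 H1]]]] [d2 [K2 [Hd2 [HK2 H2]]]].
  exists (Rmin d1 d2), (K1 * K2). split; [apply Rmin_pos; lra|]. split; [nra|].
  intros z Hz. rewrite Cmod_mult, pow_add.
  pose proof (H1 z ltac:(eapply Rlt_le_trans; [exact Hz|apply Rmin_l])).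
  pose proof (H2 z ltac:(eapply Rlt_le_trans; [exact Hz|apply Rmin_r])).
  replace (K1 * K2 * (Cmod z ^ j * Cmod z ^ k)) with ((K1 * Cmod z ^ j) * (K2 * Cmod z ^ k)) by ring.
  apply Rmult_le_compat; auto; apply Cmod_ge_0.
Qed.

Lemma bigO_weak j k (h : C -> C) : (j <= k)%nat -> bigO k h -> bigO j h.
Proof.
  intros Hjk [d [K [Hd [HK H]]]]. exists (Rmin d 1), K. split; [apply Rmin_pos; lra|].
  split; auto. intros z Hz. eapply Rle_trans. apply H. eapply Rlt_le_trans; [exact Hz|apply Rmin_l].
  apply Rmult_le_compat_l; auto.
  assert (Cmod z <= 1) by (left; eapply Rlt_le_trans; [exact Hz|apply Rmin_r]).
  replace k with (j + (k - j))%nat by lia. rewrite pow_add.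
  pose proof (pow_le (Cmod z) j (Cmod_ge_0 z)).
  assert (Cmod z ^ (k - j) <= 1) by (rewrite <- (pow1 (k-j)); apply pow_incr; split; [apply Cmod_ge_0|auto]).
  nra.
Qed.

Lemma bigO_zpow k : bigO k (fun z => z ^ k)%C.
Proof. exists 1, 1. split; [lra|]. split; [lra|]. intros. rewrite Cmod_pow. lra. Qed.

Lemma bigO_const (c : C) : bigO 0 (fun _ => c).
Proof. exists 1, (Cmod c). split; [lra|]. split; [apply Cmod_ge_0|]. intros. simpl. lra. Qed.

Lemma bigO_zero k : bigO k (fun _ => RtoC 0).
Proof. exists 1, 0. split; [lra|]. split; [lra|]. intros. rewrite Cmod_0. lra. Qed.

Lemma bigO_comp k (g h : C -> C) : bigO k g -> bigO 1 h -> bigO k (fun z => g (h z)).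
Proof.
  intros [d1 [K1 [Hd1 [HK1 H1]]]] [d2 [K2 [Hd2 [HK2 H2]]]].
  exists (Rmin d2 (d1 / (K2 + 1))), (K1 * K2 ^ k). split.
  { apply Rmin_pos; auto. apply Rdiv_lt_0_compat; lra. }
  split. { apply Rmult_le_pos; auto. apply pow_le; auto. }
  intros z Hz. 
  pose proof (H2 z ltac:(eapply Rlt_le_trans; [exact Hz|apply Rmin_l])) as Hh.
  rewrite pow_1 in Hh.
  assert (Hz2 : Cmod z < d1 / (K2 + 1)) by (eapply Rlt_le_trans; [exact Hz|apply Rmin_r]).
  assert (Cmod (h z) < d1).
  { apply Rle_lt_trans with (K2 * Cmod z); auto.
    apply (Rmult_lt_compat_r (K2 + 1)) in Hz2; [|lra].
    unfold Rdiv in Hz2. rewrite Rmult_assoc, Rinv_l, Rmult_1_r in Hz2 by lra.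
    pose proof (Cmod_ge_0 z). nra. }
  eapply Rle_trans. apply H1; auto. rewrite Rmult_assoc. apply Rmult_le_compat_l; auto.
  rewrite <- Rpow_mult_distr. apply pow_incr. split; auto. apply Cmod_ge_0.
Qed.

Lemma bigO_ps (e : nat -> C) (g : C -> C) K : ps_on_disk e g ->
  bigO (S K) (fun z => g z - Cpartial e z K)%C.
Proof.
  intros H. destruct (coef_bound e g (1/2) H ltac:(lra)) as [M [HM0 HM]].
  exists (1/4), (2 * M * 2 ^ S K). split; [lra|]. split.
  { apply Rmult_le_pos; [lra|]. apply pow_le; lra. }
  intros z Hz. eapply Rle_trans.
  apply (tail_bound e g z (1/2) (2 * Cmod z) M K H); auto; try lra.
  - split; [pose proof (Cmod_ge_0 z); lra| lra].
  - rewrite Rpow_mult_distr.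
    assert (0 <= Cmod z ^ S K) by (apply pow_le, Cmod_ge_0).
    assert (0 < 2 ^ S K) by (apply pow_lt; lra).
    assert (/ (1 - 2 * Cmod z) <= 2).
    { replace 2 with (/ (1/2)) at 2 by field. apply Rinv_le_contravar; lra. }
    assert (0 <= / (1 - 2 * Cmod z)) by (left; apply Rinv_0_lt_compat; lra).
    assert (0 <= M * (2 ^ S K * Cmod z ^ S K)) by (apply Rmult_le_pos; nra).
    replace (2 * M * 2 ^ S K * Cmod z ^ S K) with (M * (2 ^ S K * Cmod z ^ S K) * 2) by ring.
    apply Rmult_le_compat_l; auto.
Qed.

Lemma bigO_bound1 k (h : C -> C) : bigO k h -> exists d K, 0 < d /\ 0 <= K /\
  forall z, Cmod z < d -> Cmod (h z) <= K * Cmod z ^ k.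
Proof. auto. Qed.

Lemma Cpartial_2 (e : nat -> C) (z : C) :
  Cpartial e z 2 = (e 0%nat + e 1%nat * z + e 2%nat * z ^ 2)%C.
Proof. rewrite !Cpartial_S, Cpartial_0. cring. Qed.
Lemma Cpartial_3 (e : nat -> C) (z : C) :
  Cpartial e z 3 = (e 0%nat + e 1%nat * z + e 2%nat * z ^ 2 + e 3%nat * z ^ 3)%C.
Proof. rewrite !Cpartial_S, Cpartial_0. cring. Qed.

Lemma pow_diff (x y : C) r n : Cmod x <= r -> Cmod y <= r ->
  Cmod (x ^ S n - y ^ S n)%C <= INR (S n) * r ^ n * Cmod (x - y)%C.
Proof.
  intros Hx Hy. assert (Hr : 0 <= r) by (pose proof (Cmod_ge_0 x); lra).
  induction n.
  - simpl. replace (x * 1 - y * 1)%C with (x - y)%C by ring. lra.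
  - replace (x ^ S (S n) - y ^ S (S n))%C with (x * (x ^ S n - y ^ S n) + (x - y) * y ^ S n)%C
      by (simpl; ring).
    eapply Rle_trans. apply Cmod_triangle. rewrite !Cmod_mult, Cmod_pow.
    assert (Cmod y ^ S n <= r ^ S n) by (apply pow_incr; split; auto; apply Cmod_ge_0).
    pose proof (Cmod_ge_0 x). pose proof (Cmod_ge_0 (x - y)%C).
    pose proof (Cmod_ge_0 (x ^ S n - y ^ S n)%C).
    assert (Cmod x * Cmod (x ^ S n - y ^ S n)%C <= r * (INR (S n) * r ^ n * Cmod (x - y)%C)).
    { apply Rmult_le_compat; auto. }
    rewrite !S_INR in *. simpl pow in *. 
    assert (Cmod (x - y)%C * Cmod y ^ S n <= Cmod (x - y)%C * (r * r ^ n)).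
    { apply Rmult_le_compat_l; auto. }
    simpl pow in *. nra.
Qed.

Lemma INR_le_pow2 n : INR n <= 2 ^ n.
Proof.
  induction n. simpl; lra. rewrite S_INR. simpl.
  assert (1 <= 2 ^ n) by (apply pow_R1_Rle; lra). lra.
Qed.

Lemma le_epsilon' x y : (forall e, 0 < e -> x <= y + e) -> x <= y.
Proof.
  intros H. destruct (Rle_dec x y); auto. exfalso.
  specialize (H ((x - y)/2) ltac:(lra)). lra.
Qed.

Lemma tail_diff_partial (e : nat -> C) (x y : C) M r :
  (forall n, Cmod (e n) * (1/2) ^ n <= M) -> 0 <= M ->
  Cmod x <= r -> Cmod y <= r -> r <= 1/8 -> forall d,
  Cmod ((Cpartial e x (3 + d) - Cpartial e x 3) - (Cpartial e y (3 + d) - Cpartial e y 3))%C <=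
  512 * M * r ^ 3 * Cmod (x - y)%C * (1 - (1/2) ^ d).
Proof.
  intros HM HM0 Hx Hy Hr d. assert (Hr0 : 0 <= r) by (pose proof (Cmod_ge_0 x); lra).
  induction d.
  - rewrite Nat.add_0_r. replace (Cpartial e x 3 - Cpartial e x 3 - (Cpartial e y 3 - Cpartial e y 3))%C
      with (RtoC 0) by cring. rewrite Cmod_0. simpl. lra.
  - replace (3 + S d)%nat with (S (3 + d)) by lia.
    set (n := (3 + d)%nat) in *. rewrite (Cpartial_S e x n), (Cpartial_S e y n).
    replace (Cpartial e x n + e (S n) * x ^ S n - Cpartial e x 3 -
             (Cpartial e y n + e (S n) * y ^ S n - Cpartial e y 3))%C
      with ((Cpartial e x n - Cpartial e x 3 - (Cpartial e y n - Cpartial e y 3)) +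
            e (S n) * (x ^ S n - y ^ S n))%C by cring.
    eapply Rle_trans. apply Cmod_triangle. rewrite Cmod_mult.
    pose proof (pow_diff x y r n Hx Hy) as Hd.
    pose proof (INR_le_pow2 (S n)).
    assert (He : Cmod (e (S n)) <= M * 2 ^ S n).
    { pose proof (HM (S n)). replace (Cmod (e (S n))) with (Cmod (e (S n)) * (1/2) ^ S n * 2 ^ S n).
      apply Rmult_le_compat_r; auto. apply pow_le; lra.
      rewrite Rmult_assoc, <- Rpow_mult_distr. replace (1/2*2) with 1 by field. rewrite pow1. ring. }
    assert (Hk : 2 ^ d * 2 ^ d * r ^ d <= (1/2) ^ d).
    { rewrite <- !Rpow_mult_distr. apply pow_incr. split; lra. }
    assert (Cmod (e (S n)) * Cmod (x ^ S n - y ^ S n)%C <=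
            M * 2 ^ S n * (2 ^ S n * r ^ n * Cmod (x - y)%C)).
    { apply Rmult_le_compat; auto using Cmod_ge_0.
      eapply Rle_trans; [exact Hd|]. apply Rmult_le_compat_r; [apply Cmod_ge_0|].
      apply Rmult_le_compat_r; [apply pow_le; auto| auto]. }
    assert (M * 2 ^ S n * (2 ^ S n * r ^ n * Cmod (x - y)%C) <=
            256 * M * r ^ 3 * Cmod (x - y)%C * (1/2) ^ d).
    { assert (E1 : M * 2 ^ S n * (2 ^ S n * r ^ n * Cmod (x - y)%C) =
              (M * r ^ 3 * Cmod (x - y)%C) * 256 * (2 ^ d * 2 ^ d * r ^ d)).
      { unfold n. rewrite !pow_add. simpl. ring. }
      rewrite E1.
      replace (256 * M * r ^ 3 * Cmod (x - y)%C * (1 / 2) ^ d) with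
        ((M * r ^ 3 * Cmod (x - y)%C) * 256 * (1/2) ^ d) by ring.
      pose proof (Cmod_ge_0 (x - y)%C). pose proof (pow_le r 3 Hr0).
      assert (0 <= M * r ^ 3 * Cmod (x - y)%C * 256)
        by (apply Rmult_le_pos; [apply Rmult_le_pos; [apply Rmult_le_pos|]|]; lra).
      apply Rmult_le_compat_l; auto. }
    replace (512 * M * r ^ 3 * Cmod (x - y)%C * (1 - (1 / 2) ^ S d)) with
      (512 * M * r ^ 3 * Cmod (x - y)%C * (1 - (1 / 2) ^ d) + 256 * M * r ^ 3 * Cmod (x - y)%C * (1/2) ^ d)
      by (simpl; field).
    lra.
Qed.

Lemma tail_diff (e : nat -> C) (g : C -> C) (x y : C) M r : ps_on_disk e g ->
  (forall n, Cmod (e n) * (1/2) ^ n <= M) -> 0 <= M ->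
  Cmod x <= r -> Cmod y <= r -> r <= 1/8 ->
  Cmod ((g x - Cpartial e x 3) - (g y - Cpartial e y 3))%C <= 512 * M * r ^ 3 * Cmod (x - y)%C.
Proof.
  intros Hps HM HM0 Hx Hy Hr.
  destruct (Hps x ltac:(rewrite e_mod; lra)) as [Hx1 Hx2]. destruct (Hps y ltac:(rewrite e_mod; lra)) as [Hy1 Hy2].
  replace ((g x - Cpartial e x 3) - (g y - Cpartial e y 3))%C with
    ((g x - g y) - (Cpartial e x 3 - Cpartial e y 3))%C by cring.
  apply (cv_Cmod_le (fun N => Cpartial e x N - Cpartial e y N)%C _ _ _ 3).
  - exact (CV_minus _ _ _ _ Hx1 Hy1).
  - exact (CV_minus _ _ _ _ Hx2 Hy2).
  - intros N HN. replace N with (3 + (N - 3))%nat by lia.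
    apply Rle_trans with (512 * M * r ^ 3 * Cmod (x - y)%C * (1 - (1/2) ^ (N - 3))).
    2:{ pose proof (Cmod_ge_0 (x - y)%C). pose proof (Cmod_ge_0 x).
        pose proof (pow_le r 3 ltac:(lra)). pose proof (pow_le (1/2) (N - 3) ltac:(lra)).
        assert (0 <= 512 * M * r ^ 3 * Cmod (x - y)%C)
          by (apply Rmult_le_pos; [apply Rmult_le_pos; [apply Rmult_le_pos|]|]; lra).
        nra. }
    replace (Cpartial e x (3 + (N - 3)) - Cpartial e y (3 + (N - 3)) - (Cpartial e x 3 - Cpartial e y 3))%C
      with ((Cpartial e x (3 + (N - 3)) - Cpartial e x 3) - (Cpartial e y (3 + (N - 3)) - Cpartial e y 3))%C
      by cring.
    apply tail_diff_partial; auto.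
Qed.

Definition dpoly (e : nat -> C) (z : C) : C := (e 1%nat + 2 * e 2%nat * z + 3 * e 3%nat * z ^ 2)%C.

Lemma deriv_exp (e : nat -> C) (g g' : C -> C) : ps_on_disk e g ->
  (forall z, Cmod z < 1 -> C_deriv_at g z (g' z)) ->
  bigO 3 (fun z => g' z - dpoly e z)%C.
Proof.
  intros Hps Hd. destruct (coef_bound e g (1/2) Hps ltac:(lra)) as [M [HM0 HM]].
  exists (1/16), (512 * M). split; [lra|]. split; [lra|].
  intros z Hz. apply le_epsilon'. intros ep Hep.
  destruct (Hd z ltac:(lra) (ep / 3) ltac:(lra)) as [del [Hdel Hdq]].
  set (E := Cmod (e 2%nat) + 4 * Cmod (e 3%nat)).
  assert (HE : 0 <= E) by (unfold E; pose proof (Cmod_ge_0 (e 2%nat)); pose proof (Cmod_ge_0 (e 3%nat)); lra).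
  set (eta := Rmin (Rmin (del / 2) (1/16)) (ep / (3 * (E + 3584 * M + 1)))).
  assert (Heta : 0 < eta).
  { unfold eta. repeat apply Rmin_pos; try lra. apply Rdiv_lt_0_compat; lra. }
  assert (Heta1 : eta <= del / 2) by (unfold eta; eapply Rle_trans; apply Rmin_l).
  assert (Heta2 : eta <= 1/16) by (unfold eta; eapply Rle_trans; [apply Rmin_l|apply Rmin_r]).
  assert (Heta3 : eta <= ep / (3 * (E + 3584 * M + 1))) by (unfold eta; apply Rmin_r).
  set (h := RtoC eta).
  assert (Hh0 : h <> RtoC 0). { unfold h. intro HH. injection HH. lra. }
  assert (Hhm : Cmod h = eta) by (unfold h; rewrite Cmod_R, Rabs_right; lra).
  specialize (Hdq h Hh0 ltac:(rewrite e_mod, Hhm; lra)).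
  change (Cmod (((g (z + h) - g z) / h) - g' z)%C < ep / 3) in Hdq.
  set (DQ := ((g (z + h) - g z) / h)%C) in *.
  set (T := fun x => (g x - Cpartial e x 3)%C).
  assert (HDQ : (DQ - dpoly e z)%C =
     (h * (e 2%nat + 3 * e 3%nat * z + e 3%nat * h) + (T (z + h) - T z) / h)%C).
  { unfold DQ, T, dpoly. rewrite !Cpartial_3. field. exact Hh0. }
  assert (HT : Cmod (T (z + h) - T z)%C <= 512 * M * (Cmod z + eta) ^ 3 * eta).
  { unfold T. replace eta with (Cmod (z + h - z)%C) at 2
      by (replace (z + h - z)%C with h by ring; auto).
    apply tail_diff; auto; pose proof (Cmod_ge_0 z); try lra.
    rewrite <- Hhm. apply Cmod_triangle. }
  assert (H1 : Cmod (h * (e 2%nat + 3 * e 3%nat * z + e 3%nat * h))%C <= eta * E).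
  { rewrite Cmod_mult, Hhm. apply Rmult_le_compat_l; [lra|].
    eapply Rle_trans. apply Cmod_triangle. eapply Rle_trans. apply Rplus_le_compat_r. apply Cmod_triangle.
    rewrite !Cmod_mult, Hhm. rewrite Cmod_R, Rabs_right by lra.
    unfold E. pose proof (Cmod_ge_0 (e 3%nat)). pose proof (Cmod_ge_0 z). nra. }
  assert (H2 : Cmod ((T (z + h) - T z) / h)%C <= 512 * M * (Cmod z + eta) ^ 3).
  { rewrite Cmod_div by exact Hh0. rewrite Hhm. unfold Rdiv.
    apply (Rmult_le_reg_r eta); auto. rewrite Rmult_assoc, Rinv_l, Rmult_1_r by lra. exact HT. }
  assert (H3 : (Cmod z + eta) ^ 3 <= Cmod z ^ 3 + 7 * eta).
  { pose proof (Cmod_ge_0 z).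
    assert (3 * Cmod z ^ 2 + 3 * Cmod z * eta + eta ^ 2 <= 7) by (simpl; nra).
    replace ((Cmod z + eta) ^ 3) with (Cmod z ^ 3 + eta * (3 * Cmod z ^ 2 + 3 * Cmod z * eta + eta ^ 2)) by ring.
    nra. }
  assert (Cmod (g' z - dpoly e z)%C <= Cmod (g' z - DQ)%C + Cmod (DQ - dpoly e z)%C).
  { replace (g' z - dpoly e z)%C with ((g' z - DQ) + (DQ - dpoly e z))%C by ring. apply Cmod_triangle. }
  assert (Cmod (g' z - DQ)%C < ep / 3).
  { replace (g' z - DQ)%C with (- (DQ - g' z))%C by ring. rewrite Cmod_opp. exact Hdq. }
  assert (Cmod (DQ - dpoly e z)%C <= eta * E + 512 * M * (Cmod z + eta) ^ 3).
  { rewrite HDQ. eapply Rle_trans. apply Cmod_triangle. lra. }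
  assert (eta * (E + 3584 * M + 1) <= ep / 3).
  { apply (Rmult_le_compat_r (E + 3584 * M + 1)) in Heta3; [|lra].
    replace (ep / (3 * (E + 3584 * M + 1)) * (E + 3584 * M + 1)) with (ep / 3) in Heta3 by (field; lra).
    lra. }
  nra.
Qed.

Lemma small_zero (x : C) d K : 0 < d -> (forall t, 0 < t < d -> Cmod x <= K * t) -> x = RtoC 0.
Proof.
  intros Hd H. destruct (Ceq_dec x (RtoC 0)) as [E|E]; auto. exfalso.
  assert (Hx : 0 < Cmod x) by (apply Cmod_gt_0; exact E).
  set (K' := Rabs K + 1).
  set (t := Rmin (d / 2) (Cmod x / (2 * K'))).
  assert (Ht : 0 < t) by (unfold t, K'; apply Rmin_pos; [lra|]; apply Rdiv_lt_0_compat; pose proof (Rabs_pos K); lra).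
  assert (Ht1 : t < d) by (unfold t; eapply Rle_lt_trans; [apply Rmin_l|lra]).
  assert (Ht2 : t <= Cmod x / (2 * K')) by (unfold t; apply Rmin_r).
  specialize (H t ltac:(lra)).
  assert (K * t <= K' * t) by (unfold K'; pose proof (Rle_abs K); nra).
  assert (K' * t <= Cmod x / 2).
  { apply (Rmult_le_compat_l K') in Ht2; [|unfold K'; pose proof (Rabs_pos K); lra].
    replace (K' * (Cmod x / (2 * K'))) with (Cmod x / 2) in Ht2 by (field; unfold K'; pose proof (Rabs_pos K); lra).
    lra. }
  lra.
Qed.

Lemma peel (p : C) (q : R -> C) n K d Q : 0 < d -> d <= 1 -> 0 <= K ->
  (forall t, 0 < t < d -> Cmod (p + t * q t)%C <= K * t ^ S n) ->
  (forall t, 0 < t < d -> Cmod (q t) <= Q) ->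
  p = RtoC 0 /\ forall t, 0 < t < d -> Cmod (q t) <= K * t ^ n.
Proof.
  intros Hd Hd1 HK H HQ.
  assert (Hp : p = RtoC 0).
  { apply (small_zero p d (K + Q)); auto. intros t Ht.
    specialize (H t Ht). specialize (HQ t Ht).
    assert (Cmod p <= Cmod (p + t * q t)%C + Cmod (t * q t)%C).
    { replace p with ((p + t * q t) + - (t * q t))%C at 1 by ring.
      eapply Rle_trans. apply Cmod_triangle. rewrite Cmod_opp. lra. }
    rewrite Cmod_mult, Cmod_R, Rabs_right in H0 by lra.
    assert (t ^ S n <= t).
    { change (t ^ S n) with (t * t ^ n).
      assert (t ^ n <= 1) by (rewrite <- (pow1 n); apply pow_incr; lra). nra. }
    nra. }
  split; auto. intros t Ht. specialize (H t Ht). rewrite Hp in H.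
  replace (RtoC 0 + t * q t)%C with (t * q t)%C in H by ring.
  rewrite Cmod_mult, Cmod_R, Rabs_right in H by lra. change (t ^ S n) with (t * t ^ n) in H.
  apply (Rmult_le_reg_l t); [lra|]. nra.
Qed.

Lemma bigO_real k (h : C -> C) : bigO k h -> exists d K, 0 < d /\ d <= 1 /\ 0 <= K /\
  forall t, 0 < t < d -> Cmod (h (RtoC t)) <= K * t ^ k.
Proof.
  intros [d [K [Hd [HK H]]]]. exists (Rmin d 1), K. split; [apply Rmin_pos; lra|].
  split; [apply Rmin_r|]. split; auto. intros t Ht.
  replace (K * t ^ k) with (K * Cmod (RtoC t) ^ k) by (rewrite Cmod_R, Rabs_right by lra; auto). apply H.
  rewrite Cmod_R, Rabs_right by lra. eapply Rlt_le_trans; [apply Ht|apply Rmin_l].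
Qed.

Lemma uniq3 (p0 p1 p2 p3 : C) : bigO 4 (fun z => p0 + p1 * z + p2 * z ^ 2 + p3 * z ^ 3)%C ->
  p0 = RtoC 0 /\ p1 = RtoC 0 /\ p2 = RtoC 0 /\ p3 = RtoC 0.
Proof.
  intros H. destruct (bigO_real _ _ H) as [d [K [Hd [Hd1 [HK Hb]]]]].
  destruct (peel p0 (fun t => p1 + p2 * t + p3 * t ^ 2)%C 3 K d (Cmod p1 + Cmod p2 + Cmod p3))
    as [E0 H1]; auto.
  { intros t Ht. replace (p0 + t * (p1 + p2 * t + p3 * t ^ 2))%C with
      (p0 + p1 * t + p2 * t ^ 2 + p3 * t ^ 3)%C by ring. apply Hb; auto. }
  { intros t Ht. eapply Rle_trans. apply Cmod_triangle. eapply Rle_trans.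
    apply Rplus_le_compat_r. apply Cmod_triangle. rewrite !Cmod_mult, Cmod_pow, Cmod_R, Rabs_right by lra.
    pose proof (Cmod_ge_0 p2); pose proof (Cmod_ge_0 p3). assert (t <= 1) by lra.
    assert (t ^ 2 <= 1) by (simpl; nra).
    assert (Cmod p2 * t <= Cmod p2) by nra. assert (Cmod p3 * t ^ 2 <= Cmod p3) by nra. lra. }
  destruct (peel p1 (fun t => p2 + p3 * t)%C 2 K d (Cmod p2 + Cmod p3)) as [E1 H2]; auto.
  { intros t Ht. replace (p1 + t * (p2 + p3 * t))%C with (p1 + p2 * t + p3 * t ^ 2)%C by ring.
    apply H1; auto. }
  { intros t Ht. eapply Rle_trans. apply Cmod_triangle.
    rewrite !Cmod_mult, Cmod_R, Rabs_right by lra. pose proof (Cmod_ge_0 p3).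
    assert (Cmod p3 * t <= Cmod p3) by nra. lra. }
  destruct (peel p2 (fun t => p3) 1 K d (Cmod p3)) as [E2 H3]; auto.
  { intros t Ht. rewrite Cmult_comm. apply H2; auto. }
  { intros; lra. }
  repeat split; auto. apply (small_zero p3 d K); auto. intros t Ht. specialize (H3 t Ht). simpl in H3. lra.
Qed.

Lemma uniq2 (p0 p1 p2 : C) : bigO 3 (fun z => p0 + p1 * z + p2 * z ^ 2)%C ->
  p0 = RtoC 0 /\ p1 = RtoC 0 /\ p2 = RtoC 0.
Proof.
  intros H. destruct (bigO_real _ _ H) as [d [K [Hd [Hd1 [HK Hb]]]]].
  destruct (peel p0 (fun t => p1 + p2 * t)%C 2 K d (Cmod p1 + Cmod p2)) as [E0 H1]; auto.
  { intros t Ht. replace (p0 + t * (p1 + p2 * t))%C with (p0 + p1 * t + p2 * t ^ 2)%C by ring. apply Hb; auto. }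
  { intros t Ht. eapply Rle_trans. apply Cmod_triangle.
    rewrite !Cmod_mult, Cmod_R, Rabs_right by lra. pose proof (Cmod_ge_0 p2).
    assert (Cmod p2 * t <= Cmod p2) by nra. lra. }
  destruct (peel p1 (fun t => p2) 1 K d (Cmod p2)) as [E1 H2]; auto.
  { intros t Ht. rewrite Cmult_comm. apply H1; auto. }
  { intros; lra. }
  repeat split; auto. apply (small_zero p2 d K); auto. intros t Ht. specialize (H2 t Ht). simpl in H2. lra.
Qed.

Lemma bigO_id0 : bigO 0 (fun z => z).
Proof. apply (bigO_weak 0 1); [lia|]. apply (bigO_ext 1 (fun z => z ^ 1)%C _ 1); [lra| |apply bigO_zpow].
  intros; simpl; ring. Qed.

Lemma bigO_cpow0 (h : C -> C) n : bigO 0 h -> bigO 0 (fun z => h z ^ n)%C.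
Proof.
  intros H. induction n. simpl. apply bigO_const.
  apply (bigO_ext 0 (fun z => h z * h z ^ n)%C _ 1); [lra|intros; simpl; auto|].
  apply (bigO_mul 0 0); auto.
Qed.

Ltac bo0 := repeat first [ apply (bigO_add 0) | apply (bigO_sub 0) | apply (bigO_mul 0 0)
  | apply bigO_cpow0 | apply bigO_const | apply bigO_id0 | assumption ].

Lemma RtoC_minus' x y : RtoC (x - y) = (RtoC x - RtoC y)%C.
Proof. unfold RtoC, Cminus, Cplus, Copp; simpl. f_equal; ring. Qed.

Lemma divz_0 (g g' : C -> C) : divz g g' Cx0 = g' Cx0.
Proof. unfold divz. case Defs.Ceq_dec; congruence. Qed.
Lemma divz_nz (g g' : C -> C) z : z <> Cx0 -> divz g g' z = Defs.Cdiv (g z) z.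
Proof. intros. unfold divz. case Defs.Ceq_dec; congruence. Qed.

Lemma divz_exp (e : nat -> C) (g g' : C -> C) : ps_on_disk e g -> e 0%nat = RtoC 0 ->
  (forall z, Cmod z < 1 -> C_deriv_at g z (g' z)) ->
  bigO 3 (fun z => divz g g' z - (e 1%nat + e 2%nat * z + e 3%nat * z ^ 2))%C.
Proof.
  intros Hps He0 Hd.
  destruct (bigO_ps e g 3 Hps) as [d1 [K1 [Hd1 [HK1 H1]]]].
  destruct (deriv_exp e g g' Hps Hd) as [d2 [K2 [Hd2 [HK2 H2]]]].
  exists (Rmin d1 d2), (K1 + K2). split; [apply Rmin_pos; lra|]. split; [lra|].
  intros z Hz. assert (Hz1 : Cmod z < d1) by (eapply Rlt_le_trans; [exact Hz|apply Rmin_l]).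
  assert (Hz2 : Cmod z < d2) by (eapply Rlt_le_trans; [exact Hz|apply Rmin_r]).
  destruct (Defs.Ceq_dec z Cx0) as [E|E].
  - subst z. rewrite divz_0. specialize (H2 _ Hz2). rewrite e_zero in *. rewrite Cmod_0 in *.
    replace (e 1%nat + e 2%nat * RtoC 0 + e 3%nat * RtoC 0 ^ 2)%C with (dpoly e (RtoC 0))
      by (unfold dpoly; ring). simpl pow in *. lra.
  - rewrite divz_nz by auto. rewrite e_div. rewrite e_zero in E.
    replace (g z / z - (e 1%nat + e 2%nat * z + e 3%nat * z ^ 2))%C with
      ((g z - Cpartial e z 3) / z)%C by (rewrite Cpartial_3, He0; field; auto).
    rewrite Cmod_div by auto. specialize (H1 _ Hz1).
    assert (0 < Cmod z) by (apply Cmod_gt_0; auto).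
    unfold Rdiv. apply (Rmult_le_reg_r (Cmod z)); auto.
    rewrite Rmult_assoc, Rinv_l, Rmult_1_r by lra.
    pose proof (pow_le (Cmod z) 4 (Cmod_ge_0 z)).
    replace ((K1 + K2) * Cmod z ^ 3 * Cmod z) with ((K1 + K2) * Cmod z ^ 4) by ring.
    nra.
Qed.

Lemma rlam_exp lam (e : nat -> C) (g g' : C -> C) : ps_on_disk e g -> e 0%nat = RtoC 0 ->
  (forall z, Cmod z < 1 -> C_deriv_at g z (g' z)) ->
  bigO 3 (fun z => Rlam_op lam g g' z -
     (e 1%nat + RtoC (1 + lam) * e 2%nat * z + RtoC (1 + 2 * lam) * e 3%nat * z ^ 2))%C.
Proof.
  intros Hps He0 Hd.
  pose proof (divz_exp e g g' Hps He0 Hd) as H1. pose proof (deriv_exp e g g' Hps Hd) as H2.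
  apply (bigO_ext 3 (fun z => RtoC (1 - lam) * (divz g g' z - (e 1%nat + e 2%nat * z + e 3%nat * z ^ 2)) +
                             RtoC lam * (g' z - dpoly e z))%C _ 1); [lra| |].
  - intros z _. change (Rlam_op lam g g' z) with (RtoC (1-lam) * divz g g' z + RtoC lam * g' z)%C.
    unfold dpoly. rewrite RtoC_minus', !RtoC_plus, RtoC_mult. ring.
  - apply bigO_add; apply bigO_scal; auto.
Qed.

Lemma comp_exp (Bc c : nat -> C) (phi om : C -> C) : ps_on_disk Bc phi -> ps_on_disk c om ->
  c 0%nat = RtoC 0 -> Bc 0%nat = RtoC 1 ->
  bigO 3 (fun z => phi (om z) - (RtoC 1 + Bc 1%nat * c 1%nat * z +
                   (Bc 1%nat * c 2%nat + Bc 2%nat * c 1%nat ^ 2) * z ^ 2))%C.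
Proof.
  intros Hphi Hom Hc0 HB0.
  pose proof (bigO_ps Bc phi 2 Hphi) as Ep.
  pose proof (bigO_ps c om 2 Hom) as Eo.
  assert (Hlin : bigO 1 (fun z => c 1%nat * z)%C).
  { apply (bigO_ext 1 (fun z => c 1%nat * z ^ 1)%C _ 1); [lra|intros; simpl; ring|].
    apply bigO_scal, bigO_zpow. }
  assert (Hq : bigO 2 (fun z => c 2%nat * z ^ 2)%C) by (apply bigO_scal, bigO_zpow).
  assert (Hm : bigO 2 (fun z => om z - c 1%nat * z)%C).
  { apply (bigO_ext 2 (fun z => (om z - Cpartial c z 2) + c 2%nat * z ^ 2)%C _ 1); [lra| |].
    - intros z _. rewrite Cpartial_2, Hc0. ring.
    - apply bigO_add; auto. apply (bigO_weak 2 3); auto. }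
  assert (Ho1 : bigO 1 om).
  { apply (bigO_ext 1 (fun z => (om z - c 1%nat * z) + c 1%nat * z)%C _ 1); [lra|intros; ring|].
    apply bigO_add; auto. apply (bigO_weak 1 2); auto. }
  assert (Hp : bigO 1 (fun z => om z + c 1%nat * z)%C) by (apply bigO_add; auto).
  apply (bigO_ext 3 (fun z => (phi (om z) - Cpartial Bc (om z) 2) + Bc 1%nat * (om z - Cpartial c z 2)
           + Bc 2%nat * ((om z - c 1%nat * z) * (om z + c 1%nat * z)))%C _ 1); [lra| |].
  - intros z _. rewrite !Cpartial_2, Hc0, HB0. cring.
  - apply bigO_add; [apply bigO_add|].
    + exact (bigO_comp 3 (fun w => phi w - Cpartial Bc w 2)%C om Ep Ho1).
    + apply bigO_scal; auto.
    + apply bigO_scal. exact (bigO_mul 2 1 _ _ Hm Hp).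
Qed.

Lemma F_coefs (a A : nat -> C) (f F : C -> C) r0 :
  ps_on_disk a f -> a 0%nat = RtoC 0 -> a 1%nat = RtoC 1 ->
  ps_on_disk A F -> A 0%nat = RtoC 0 -> 0 < r0 ->
  (forall w, Cmod w < r0 -> f (F w) = w) ->
  A 1%nat = RtoC 1 /\ A 2%nat = (- a 2%nat)%C /\ A 3%nat = (2 * a 2%nat ^ 2 - a 3%nat)%C.
Proof.
  intros Hf Ha0 Ha1 HF HA0 Hr0 Hinv.
  set (A1 := A 1%nat). set (A2 := A 2%nat). set (A3 := A 3%nat).
  set (a2 := a 2%nat). set (a3 := a 3%nat).
  pose proof (bigO_ps a f 3 Hf) as Ef.
  pose proof (bigO_ps A F 3 HF) as EF.
  set (X := fun w => (A1 * w + A2 * w ^ 2 + A3 * w ^ 3)%C).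
  assert (HX : forall w, Cpartial A w 3 = X w) by (intros; rewrite Cpartial_3, HA0; unfold X; fold A1 A2 A3; cring).
  assert (HX0 : bigO 0 X) by (unfold X; bo0).
  assert (HF1 : bigO 1 F).
  { apply (bigO_ext 1 (fun w => (F w - Cpartial A w 3) + (A1 * w ^ 1 + (A2 * w ^ 2 + A3 * w ^ 3)))%C _ 1);
      [lra|intros; rewrite HX; unfold X; simpl; ring|].
    apply bigO_add. apply (bigO_weak 1 4); auto.
    apply bigO_add. apply bigO_scal, bigO_zpow.
    apply bigO_add; apply bigO_scal.
    apply (bigO_weak 1 2); [lia|apply bigO_zpow]. apply (bigO_weak 1 3); [lia|apply bigO_zpow]. }
  assert (HF0 : bigO 0 F) by (apply (bigO_weak 0 1); auto).
  set (Y := fun w => (A2 + A3 * w)%C).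
  set (R := fun w => (a2 * (2 * A1 * A3 + Y w ^ 2) +
                      a3 * Y w * ((A1 + w * Y w) ^ 2 + A1 * (A1 + w * Y w) + A1 ^ 2))%C).
  assert (HR : bigO 0 R) by (unfold R, Y; bo0).
  assert (H : bigO 4 (fun w => (f (F w) - Cpartial a (F w) 3)
      + (F w - Cpartial A w 3) * (1 + a2 * (F w + X w) + a3 * (F w ^ 2 + F w * X w + X w ^ 2))
      + w ^ 4 * R w)%C).
  { apply bigO_add; [apply bigO_add|].
    - exact (bigO_comp 4 (fun x => f x - Cpartial a x 3)%C F Ef HF1).
    - apply (bigO_mul 4 0); auto. bo0.
    - apply (bigO_mul 4 0). apply bigO_zpow. auto. }
  assert (H' : bigO 4 (fun w => RtoC 0 + (1 - A1) * w + (- (A2 + a2 * A1 ^ 2)) * w ^ 2 +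
                 (- (A3 + 2 * a2 * A1 * A2 + a3 * A1 ^ 3)) * w ^ 3)%C).
  { refine (bigO_ext 4 _ _ r0 Hr0 _ H). intros w Hw.
    rewrite (Hinv w Hw). rewrite Cpartial_3, Ha0, Ha1, HX. fold a2 a3.
    unfold R, Y, X. ring. }
  destruct (uniq3 _ _ _ _ H') as [_ [E1 [E2 E3]]].
  assert (EA1 : A1 = RtoC 1).
  { replace A1 with (RtoC 1 - (1 - A1))%C by ring. rewrite E1. ring. }
  assert (EA2 : A2 = (- a2)%C).
  { replace A2 with (- (- (A2 + a2 * A1 ^ 2)) - a2 * A1 ^ 2)%C by ring. rewrite E2, EA1. ring. }
  split; auto. split; auto.
  replace A3 with (- (- (A3 + 2 * a2 * A1 * A2 + a3 * A1 ^ 3)) - (2 * a2 * A1 * A2 + a3 * A1 ^ 3))%C by ring.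
  rewrite E3, EA1, EA2. ring.
Qed.

Fixpoint csum (g : nat -> C) (n : nat) : C :=
  match n with O => RtoC 0 | S n' => (csum g n' + g n')%C end.
Fixpoint rsum (g : nat -> R) (n : nat) : R :=
  match n with O => 0 | S n' => rsum g n' + g n' end.

Lemma csum_ext g h n : (forall k, (k < n)%nat -> g k = h k) -> csum g n = csum h n.
Proof. induction n; simpl; intros H; auto. rewrite IHn, H; auto. Qed.
Lemma csum_plus g h n : csum (fun k => g k + h k)%C n = (csum g n + csum h n)%C.
Proof. induction n; simpl. cring. rewrite IHn. cring. Qed.
Lemma csum_minus g h n : csum (fun k => g k - h k)%C n = (csum g n - csum h n)%C.
Proof. induction n; simpl. cring. rewrite IHn. cring. Qed.
Lemma csum_scal (c : C) g n : csum (fun k => c * g k)%C n = (c * csum g n)%C.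
Proof. induction n; simpl. cring. rewrite IHn. cring. Qed.
Lemma csum_const (c : C) n : csum (fun _ => c) n = (RtoC (INR n) * c)%C.
Proof. induction n. change (INR 0) with 0. simpl csum. cring.
  change (csum (fun _ => c) (S n)) with (csum (fun _ => c) n + c)%C. rewrite IHn, S_INR, RtoC_plus. cring. Qed.
Lemma csum_conj g n : Cconj (csum g n) = csum (fun k => Cconj (g k)) n.
Proof. induction n; simpl. unfold Cconj, RtoC; simpl. f_equal. lra. rewrite Cplus_conj, IHn. auto. Qed.
Lemma csum_RtoC h n : csum (fun k => RtoC (h k)) n = RtoC (rsum h n).
Proof. induction n; simpl; auto. rewrite IHn, RtoC_plus. auto. Qed.
Lemma rsum_le g h n : (forall k, (k < n)%nat -> g k <= h k) -> rsum g n <= rsum h n.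
Proof. induction n; simpl; intros H. lra. pose proof (H n ltac:(lia)). pose proof (IHn ltac:(intros; apply H; lia)). lra. Qed.
Lemma rsum_ge0 g n : (forall k, (k < n)%nat -> 0 <= g k) -> 0 <= rsum g n.
Proof. induction n; simpl; intros H. lra. pose proof (H n ltac:(lia)). pose proof (IHn ltac:(intros; apply H; lia)). lra. Qed.
Lemma rsum_scal c g n : rsum (fun k => c * g k) n = c * rsum g n.
Proof. induction n; simpl. ring. rewrite IHn. ring. Qed.

Lemma geom_sum (w : C) n : ((w - 1) * csum (fun k => w ^ k)%C n = w ^ n - 1)%C.
Proof. induction n. simpl csum. simpl Cpow. cring. change (csum (fun k => w ^ k)%C (S n)) with (csum (fun k => w ^ k)%C n + w ^ n)%C. rewrite Cmult_plus_distr_l, IHn. simpl. ring. Qed.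

Lemma geom_zero (w : C) n : (w ^ n)%C = RtoC 1 -> w <> RtoC 1 -> csum (fun k => w ^ k)%C n = RtoC 0.
Proof.
  intros H1 H2. pose proof (geom_sum w n) as G. rewrite H1 in G.
  replace (csum (fun k => w ^ k)%C n) with (/ (w - 1) * ((w - 1) * csum (fun k => w ^ k)%C n))%C.
  rewrite G. ring. field. intro HH. apply H2. replace w with ((w - 1) + 1)%C by ring. rewrite HH. ring.
Qed.

Definition zeta (m : nat) : C := (cos (2 * PI / INR m), sin (2 * PI / INR m)).

Lemma zeta_pow m k : (zeta m ^ k)%C = (cos (INR k * (2 * PI / INR m)), sin (INR k * (2 * PI / INR m))).
Proof.
  induction k. simpl. rewrite Rmult_0_l, cos_0, sin_0. reflexivity.
  rewrite Cpow_S, IHk, S_INR. unfold zeta, Cmult. simpl.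
  replace ((INR k + 1) * (2 * PI / INR m)) with (2 * PI / INR m + INR k * (2 * PI / INR m)) by ring.
  rewrite cos_plus, sin_plus. f_equal; ring.
Qed.

Lemma Cmod_zeta_pow m k : Cmod (zeta m ^ k)%C = 1.
Proof. rewrite zeta_pow. unfold Cmod. cbn [fst snd]. set (x := INR k * (2 * PI / INR m)).
  pose proof (sin2_cos2 x). unfold Rsqr in H.
  replace (cos x ^ 2 + sin x ^ 2) with 1 by (simpl; nra). apply sqrt_1. Qed.

Lemma zeta_m m : (0 < m)%nat -> (zeta m ^ m)%C = RtoC 1.
Proof.
  intros Hm. rewrite zeta_pow. replace (INR m * (2 * PI / INR m)) with (2 * PI).
  rewrite cos_2PI, sin_2PI. reflexivity. field. apply not_0_INR; lia.
Qed.

Lemma zeta_ne1 m j : (0 < j < m)%nat -> (zeta m ^ j)%C <> RtoC 1.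
Proof.
  intros Hj H. rewrite zeta_pow in H. injection H as H1 H2.
  set (x := INR j * (2 * PI / INR m) / 2).
  assert (Hm : 0 < INR m) by (apply lt_0_INR; lia).
  assert (Hx0 : 0 < x).
  { unfold x. pose proof PI_RGT_0. apply Rdiv_lt_0_compat; [|lra].
    apply Rmult_lt_0_compat. apply lt_0_INR; lia. apply Rdiv_lt_0_compat; lra. }
  assert (HxP : x < PI).
  { unfold x. pose proof PI_RGT_0. assert (INR j < INR m) by (apply lt_INR; lia).
    replace (INR j * (2 * PI / INR m) / 2) with (PI * (INR j / INR m)) by (field; lra).
    assert (INR j / INR m < 1). { apply (Rmult_lt_reg_r (INR m)); auto. unfold Rdiv.
      rewrite Rmult_assoc, Rinv_l, Rmult_1_r by lra. lra. }
    nra. }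
  pose proof (sin_gt_0 x Hx0 HxP).
  replace (INR j * (2 * PI / INR m)) with (2 * x) in H1 by (unfold x; field; lra).
  rewrite cos_2a_sin in H1. nra.
Qed.

Lemma zeta_conj m e : (0 < m)%nat -> (e <= m)%nat -> Cconj (zeta m ^ e)%C = (zeta m ^ (m - e))%C.
Proof.
  intros Hm He. assert (Hnz : (zeta m ^ e)%C <> RtoC 0).
  { intro HH. pose proof (Cmod_zeta_pow m e). rewrite HH, Cmod_0 in H. lra. }
  assert (H1 : (zeta m ^ e * Cconj (zeta m ^ e))%C = RtoC 1).
  { rewrite <- Cmod2_conj, Cmod_zeta_pow. simpl. f_equal. ring. }
  assert (H2 : (zeta m ^ e * zeta m ^ (m - e))%C = RtoC 1).
  { rewrite <- Cpow_add_r. replace (e + (m - e))%nat with m by lia. apply zeta_m; auto. }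
  replace (Cconj (zeta m ^ e)) with (/ zeta m ^ e * (zeta m ^ e * Cconj (zeta m ^ e)))%C by (field; auto).
  rewrite H1, <- H2. field. auto.
Qed.

Lemma sum_roots m e : (0 < m)%nat -> (0 < e < 2 * m)%nat ->
  csum (fun k => (zeta m ^ e) ^ k)%C m = if Nat.eq_dec e m then RtoC (INR m) else RtoC 0.
Proof.
  intros Hm He. destruct (Nat.eq_dec e m).
  - subst. rewrite zeta_m by auto. rewrite (csum_ext _ (fun _ => RtoC 1)).
    rewrite csum_const. ring. intros. apply Cpow_1_l.
  - apply geom_zero.
    + rewrite <- Cpow_mult_r, Nat.mul_comm, Cpow_mult_r, zeta_m by auto. apply Cpow_1_l.
    + destruct (Compare_dec.lt_dec e m). apply zeta_ne1; lia.
      replace e with (m + (e - m))%nat by lia. rewrite Cpow_add_r, zeta_m by auto.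
      rewrite Cmult_1_l. apply zeta_ne1; lia.
Qed.

Lemma pow_swap (x : C) k n : ((x ^ k) ^ n = (x ^ n) ^ k)%C.
Proof. rewrite <- !Cpow_mult_r, Nat.mul_comm. auto. Qed.

Lemma dft (b : nat -> C) (r : R) m j D : (0 < j < m)%nat -> (D < m + j)%nat ->
  csum (fun k => Cpartial b (RtoC r * zeta m ^ k) D * (zeta m ^ (m - j)) ^ k)%C m =
  if Compare_dec.le_dec j D then (RtoC (INR m) * b j * RtoC r ^ j)%C else RtoC 0.
Proof.
  intros Hj. induction D; intros HD.
  - rewrite (csum_ext _ (fun k => b 0%nat * (zeta m ^ (m - j)) ^ k)%C).
    2:{ intros. rewrite Cpartial_0. auto. }
    rewrite csum_scal, sum_roots by lia. destruct (Nat.eq_dec (m - j) m); [lia|].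
    destruct (Compare_dec.le_dec j 0); [lia|]. ring.
  - rewrite (csum_ext _ (fun k => Cpartial b (RtoC r * zeta m ^ k) D * (zeta m ^ (m - j)) ^ k +
        (b (S D) * RtoC r ^ S D) * (zeta m ^ (S D + (m - j))) ^ k)%C).
    2:{ intros k _. rewrite Cpartial_S. rewrite Cpow_add_r, Cpow_mult_l, Cpow_mult_l, pow_swap. ring. }
    rewrite csum_plus, csum_scal, IHD by lia. rewrite sum_roots by lia.
    destruct (Nat.eq_dec (S D + (m - j)) m);
    destruct (Compare_dec.le_dec j D); destruct (Compare_dec.le_dec j (S D)); try lia.
    + assert (j = S D) by lia. subst. ring.
    + ring.
    + ring.
Qed.

Definition shift (c : nat -> C) (n : nat) : C := match n with O => RtoC 0 | S n' => c n' end.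

Lemma shift_partial (c : nat -> C) (z : C) N : Cpartial (shift c) z (S N) = (z * Cpartial c z N)%C.
Proof.
  induction N.
  - rewrite Cpartial_S, !Cpartial_0. simpl. cring.
  - rewrite Cpartial_S, IHN, (Cpartial_S c z N). simpl. cring.
Qed.

Lemma expand9 (v u ub w wb : nat -> C) (al be : C) n :
  csum (fun k => (v k - al * u k - be * w k) * (Cconj (v k) - Cconj al * ub k - Cconj be * wb k))%C n =
  (csum (fun k => v k * Cconj (v k)) n - Cconj al * csum (fun k => v k * ub k) n
   - al * csum (fun k => Cconj (v k) * u k) n - Cconj be * csum (fun k => v k * wb k) n
   - be * csum (fun k => Cconj (v k) * w k) n + al * Cconj al * csum (fun k => u k * ub k) n
   + be * Cconj be * csum (fun k => w k * wb k) n + al * Cconj be * csum (fun k => u k * wb k) n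
   + be * Cconj al * csum (fun k => w k * ub k) n)%C.
Proof. induction n. simpl. ring. cbn [csum]. rewrite IHn. ring. Qed.


Lemma RtoC_Cmod2 (x : C) : RtoC (Cmod x ^ 2) = (x * Cconj x)%C.
Proof. apply Cmod2_conj. Qed.

Lemma bessel (v u w : nat -> C) (al be : C) m :
  (forall k, Cmod (u k) = 1) -> (forall k, Cmod (w k) = 1) ->
  csum (fun k => u k * Cconj (w k))%C m = RtoC 0 ->
  csum (fun k => v k * Cconj (u k))%C m = (RtoC (INR m) * al)%C ->
  csum (fun k => v k * Cconj (w k))%C m = (RtoC (INR m) * be)%C ->
  INR m * (Cmod al ^ 2 + Cmod be ^ 2) <= rsum (fun k => Cmod (v k) ^ 2) m.
Proof.
  intros Hu Hw Huw Hv1 Hv2.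
  set (d := fun k => (v k - al * u k - be * w k)%C).
  assert (H0 : 0 <= rsum (fun k => Cmod (d k) ^ 2) m) by (apply rsum_ge0; intros; apply pow2_ge_0).
  assert (E : RtoC (rsum (fun k => Cmod (d k) ^ 2) m) =
              RtoC (rsum (fun k => Cmod (v k) ^ 2) m - INR m * (Cmod al ^ 2 + Cmod be ^ 2))).
  { rewrite <- csum_RtoC. rewrite (csum_ext _ (fun k => (v k - al * u k - be * w k) *
          (Cconj (v k) - Cconj al * Cconj (u k) - Cconj be * Cconj (w k)))%C).
    2:{ intros k _. rewrite RtoC_Cmod2. unfold d. rewrite !Cminus_conj, !Cmult_conj. auto. }
    rewrite expand9.
    assert (Huu : forall k, (u k * Cconj (u k))%C = RtoC 1).
    { intros. rewrite <- RtoC_Cmod2, Hu. f_equal. ring. }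
    assert (Hww : forall k, (w k * Cconj (w k))%C = RtoC 1).
    { intros. rewrite <- RtoC_Cmod2, Hw. f_equal. ring. }
    rewrite (csum_ext (fun k => u k * Cconj (u k))%C (fun _ => RtoC 1)) by auto.
    rewrite (csum_ext (fun k => w k * Cconj (w k))%C (fun _ => RtoC 1)) by auto.
    rewrite !csum_const.
    rewrite (csum_ext (fun k => Cconj (v k) * u k)%C (fun k => Cconj (v k * Cconj (u k)))%C).
    2:{ intros. rewrite Cmult_conj, Cconj_conj. ring. }
    rewrite (csum_ext (fun k => Cconj (v k) * w k)%C (fun k => Cconj (v k * Cconj (w k)))%C).
    2:{ intros. rewrite Cmult_conj, Cconj_conj. ring. }
    rewrite (csum_ext (fun k => w k * Cconj (u k))%C (fun k => Cconj (u k * Cconj (w k)))%C).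
    2:{ intros. rewrite Cmult_conj, Cconj_conj. ring. }
    rewrite <- !csum_conj. rewrite Huw, Hv1, Hv2.
    rewrite !Cmult_conj.
    assert (Hc : forall x : R, Cconj (RtoC x) = RtoC x) by (intros; unfold Cconj, RtoC; simpl; f_equal; ring).
    rewrite !Hc. rewrite RtoC_minus', RtoC_mult, RtoC_plus, !RtoC_Cmod2.
    rewrite <- csum_RtoC.
    rewrite (csum_ext (fun k => RtoC (Cmod (v k) ^ 2)) (fun k => v k * Cconj (v k))%C)
      by (intros; apply RtoC_Cmod2).
    ring. }
  apply RtoC_inj in E. lra.
Qed.

Lemma Cconj_R (x : R) : Cconj (RtoC x) = RtoC x.
Proof. unfold Cconj, RtoC; simpl. f_equal. ring. Qed.

Lemma expand4 (u : nat -> C) (p : C) n :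
  csum (fun k => (1 + p * u k) * (1 + Cconj p * Cconj (u k)))%C n =
  (RtoC (INR n) + p * csum u n + Cconj p * csum (fun k => Cconj (u k)) n
   + p * Cconj p * csum (fun k => u k * Cconj (u k)) n)%C.
Proof. induction n. simpl. ring. cbn [csum]. rewrite IHn, S_INR, RtoC_plus. ring. Qed.

Lemma circ_mean (u : nat -> C) (p : C) m : (forall k, Cmod (u k) = 1) -> csum u m = RtoC 0 ->
  rsum (fun k => Cmod (1 + p * u k)%C ^ 2) m = INR m * (1 + Cmod p ^ 2).
Proof.
  intros Hu Hs. apply RtoC_inj. rewrite <- csum_RtoC.
  rewrite (csum_ext _ (fun k => (1 + p * u k) * (1 + Cconj p * Cconj (u k)))%C).
  2:{ intros. rewrite RtoC_Cmod2, Cplus_conj, Cmult_conj, Cconj_R. auto. }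
  rewrite expand4. rewrite <- csum_conj, Hs.
  rewrite (csum_ext (fun k => u k * Cconj (u k))%C (fun _ => RtoC 1)).
  2:{ intros. rewrite <- RtoC_Cmod2, Hu. f_equal. ring. }
  rewrite csum_const, RtoC_mult, RtoC_plus, RtoC_Cmod2.
  rewrite Cconj_R. ring.
Qed.

Lemma schwarz_approx (c : nat -> C) (om : C -> C) : ps_on_disk c om -> c 0%nat = RtoC 0 ->
  (forall z, Cmod z < 1 -> Cmod (om z) < 1) -> forall (p : C) r eps, 0 < r < 1 -> 0 < eps ->
  Cmod (c 1%nat) ^ 2 * r ^ 2 + Cmod (c 2%nat + p * c 1%nat)%C ^ 2 * r ^ 4 <=
  (1 + eps) ^ 2 * (1 + Cmod p ^ 2 * r ^ 2).
Proof.
  intros Hps Hc0 Hom p r eps Hr Heps.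
  set (s := (1 + r) / 2).
  destruct (coef_bound c om s Hps ltac:(unfold s; lra)) as [M [HM0 HM]].
  set (q := r / s).
  assert (Hq : 0 <= q < 1).
  { unfold q, s. split. apply Rle_mult_inv_pos; lra.
    apply (Rmult_lt_reg_r ((1 + r) / 2)); [lra|]. unfold Rdiv. rewrite Rmult_assoc, Rinv_l by lra. lra. }
  destruct (pow_lt_1_zero q ltac:(rewrite Rabs_right; lra) (eps * (1 - q) / (M + 1)))
    as [N0 HN0].
  { apply Rdiv_lt_0_compat; [apply Rmult_lt_0_compat|]; lra. }
  set (N := (N0 + 2)%nat).
  assert (Htail : M * q ^ S N * / (1 - q) <= eps).
  { specialize (HN0 (S N) ltac:(unfold N; lia)). rewrite Rabs_right in HN0 by (apply Rle_ge, pow_le; lra).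
    apply (Rmult_le_reg_r (1 - q)); [lra|]. rewrite Rmult_assoc, Rinv_l, Rmult_1_r by lra.
    assert (q ^ S N * (M + 1) <= eps * (1 - q)).
    { apply (Rmult_lt_compat_r (M + 1)) in HN0; [|lra].
      replace (eps * (1 - q) / (M + 1) * (M + 1)) with (eps * (1 - q)) in HN0 by (field; lra). lra. }
    pose proof (pow_le q (S N) ltac:(lra)). nra. }
  set (m := (N + 3)%nat).
  assert (Hm : (0 < m)%nat) by (unfold m; lia).
  set (z := fun k => (RtoC r * zeta m ^ k)%C).
  assert (Hz : forall k, Cmod (z k) = r).
  { intros. unfold z. rewrite Cmod_mult, Cmod_zeta_pow, Cmod_R, Rabs_right; lra. }
  set (v := fun k => (Cpartial c (z k) N * (1 + p * z k))%C).
  assert (Hv : forall k, v k = (Cpartial c (z k) N + p * Cpartial (shift c) (z k) (S N))%C).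
  { intros. unfold v. rewrite shift_partial. ring. }
  assert (Hcj : forall j, (0 < j < m)%nat -> forall k, Cconj ((zeta m ^ j) ^ k)%C = ((zeta m ^ (m - j)) ^ k)%C).
  { intros j Hj k. rewrite Cpow_conj, zeta_conj by lia. auto. }
  assert (HF : forall j, (0 < j < 3)%nat ->
     csum (fun k => v k * Cconj ((zeta m ^ j) ^ k))%C m =
     (RtoC (INR m) * (c j + p * shift c j) * RtoC r ^ j)%C).
  { intros j Hj. rewrite (csum_ext _ (fun k => Cpartial c (RtoC r * zeta m ^ k) N * (zeta m ^ (m - j)) ^ k
        + p * (Cpartial (shift c) (RtoC r * zeta m ^ k) (S N) * (zeta m ^ (m - j)) ^ k))%C).
    2:{ intros k _. rewrite Hv, Hcj by (unfold m; lia). unfold z. ring. }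
    rewrite csum_plus, csum_scal. rewrite !dft by (unfold m; lia).
    destruct (Compare_dec.le_dec j N); [|unfold N in *; lia].
    destruct (Compare_dec.le_dec j (S N)); [|lia]. ring. }
  assert (HF1 := HF 1%nat ltac:(lia)). assert (HF2 := HF 2%nat ltac:(lia)).
  simpl shift in HF1, HF2. rewrite Hc0 in HF1.
  assert (Hb := bessel v (fun k => (zeta m ^ 1) ^ k)%C (fun k => (zeta m ^ 2) ^ k)%C
                 (c 1%nat * RtoC r)%C ((c 2%nat + p * c 1%nat) * RtoC r ^ 2)%C m).
  assert (Hb' : INR m * (Cmod (c 1%nat * RtoC r)%C ^ 2 + Cmod ((c 2%nat + p * c 1%nat) * RtoC r ^ 2)%C ^ 2)
                <= rsum (fun k => Cmod (v k) ^ 2) m).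
  { apply Hb.
    - intros; rewrite Cmod_pow, Cmod_zeta_pow, pow1; auto.
    - intros; rewrite Cmod_pow, Cmod_zeta_pow, pow1; auto.
    - rewrite (csum_ext _ (fun k => (zeta m ^ (m - 1)) ^ k)%C).
      + rewrite sum_roots by (unfold m; lia). destruct (Nat.eq_dec (m - 1) m); [lia|auto].
      + intros k _. rewrite Hcj by (unfold m; lia). rewrite <- Cpow_mult_l, <- Cpow_add_r.
        replace (1 + (m - 2))%nat with (m - 1)%nat by (unfold m; lia). auto.
    - rewrite HF1. simpl. ring.
    - rewrite HF2. ring. }
  assert (Hup : rsum (fun k => Cmod (v k) ^ 2) m <= (1 + eps) ^ 2 * (INR m * (1 + Cmod (p * RtoC r)%C ^ 2))).
  { rewrite <- (circ_mean (fun k => zeta m ^ k)%C (p * RtoC r)%C m).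
    2:{ intros; apply Cmod_zeta_pow. }
    2:{ rewrite (csum_ext _ (fun k => (zeta m ^ 1) ^ k)%C).
        rewrite sum_roots by (unfold m; lia). destruct (Nat.eq_dec 1 m); [unfold m in *; lia|auto].
        intros; rewrite Cpow_1_r; auto. }
    rewrite <- rsum_scal. apply rsum_le. intros k _.
    assert (HP : Cmod (Cpartial c (z k) N) <= 1 + eps).
    { assert (Hzk : Cmod (z k) < 1) by (rewrite Hz; lra).
      pose proof (Hom (z k) Hzk).
      pose proof (tail_bound c om (z k) s q M N Hps Hzk ltac:(unfold s; lra) Hq
                    ltac:(rewrite Hz; unfold q, s; right; field; lra) HM HM0).
      replace (Cpartial c (z k) N) with (om (z k) - (om (z k) - Cpartial c (z k) N))%C by cring.
      eapply Rle_trans. apply Cmod_triangle. rewrite Cmod_opp. lra. }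
    unfold v. rewrite Cmod_mult.
    replace (1 + p * RtoC r * zeta m ^ k)%C with (1 + p * z k)%C by (unfold z; ring).
    pose proof (Cmod_ge_0 (Cpartial c (z k) N)). pose proof (Cmod_ge_0 (1 + p * z k)%C).
    rewrite Rpow_mult_distr. apply Rmult_le_compat_r. apply pow2_ge_0.
    apply pow_incr. lra. }
  assert (HmR : 0 < INR m) by (apply lt_0_INR; auto).
  rewrite !Cmod_mult, Cmod_pow, Cmod_R, Rabs_right in Hb' by lra.
  rewrite !Cmod_mult, Cmod_R, Rabs_right in Hup by lra.
  assert (HH : INR m * (Cmod (c 1%nat) ^ 2 * r ^ 2 + Cmod (c 2%nat + p * c 1%nat)%C ^ 2 * r ^ 4) <=
               INR m * ((1 + eps) ^ 2 * (1 + Cmod p ^ 2 * r ^ 2))).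
  { replace (INR m * (Cmod (c 1%nat) ^ 2 * r ^ 2 + Cmod (c 2%nat + p * c 1%nat)%C ^ 2 * r ^ 4)) with
      (INR m * ((Cmod (c 1%nat) * r) ^ 2 + (Cmod (c 2%nat + p * c 1%nat)%C * r ^ 2) ^ 2)) by ring.
    replace (INR m * ((1 + eps) ^ 2 * (1 + Cmod p ^ 2 * r ^ 2))) with
      ((1 + eps) ^ 2 * (INR m * (1 + (Cmod p * r) ^ 2))) by ring.
    lra. }
  apply Rmult_le_reg_l in HH; auto.
Qed.

Lemma le_eps2 x y : (forall e, 0 < e -> x <= y + e) -> x <= y.
Proof.
  intros H. destruct (Rle_dec x y); auto. exfalso.
  specialize (H ((x - y)/2) ltac:(lra)). lra.
Qed.

Lemma lim_eps X Y : 0 <= Y -> (forall eps, 0 < eps -> X <= (1 + eps) ^ 2 * Y) -> X <= Y.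
Proof.
  intros HY H. apply le_eps2. intros e He.
  set (eps := Rmin 1 (e / (3 * Y + 1))).
  assert (H1 : 0 < eps) by (unfold eps; apply Rmin_pos; [lra|apply Rdiv_lt_0_compat; lra]).
  assert (H2 : eps <= 1) by (unfold eps; apply Rmin_l).
  assert (H3 : eps * (3 * Y + 1) <= e).
  { assert (eps <= e / (3 * Y + 1)) by (unfold eps; apply Rmin_r).
    apply (Rmult_le_compat_r (3 * Y + 1)) in H0; [|lra].
    replace (e / (3 * Y + 1) * (3 * Y + 1)) with e in H0 by (field; lra). lra. }
  specialize (H eps H1). nra.
Qed.

Lemma lim_r X Y Z : 0 <= X -> 0 <= Y ->
  (forall r, 0 < r < 1 -> X * r ^ 2 + Y * r ^ 4 <= 1 + Z * r ^ 2) -> X + Y <= 1 + Z * 1.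
Proof.
  intros HX HY H. apply le_eps2. intros e He.
  set (de := Rmin (1/2) (e / (4 * (X + Y + Rabs Z + 1)))).
  assert (Hpos : 0 < X + Y + Rabs Z + 1) by (pose proof (Rabs_pos Z); lra).
  assert (H1 : 0 < de) by (unfold de; apply Rmin_pos; [lra|apply Rdiv_lt_0_compat; lra]).
  assert (H2 : de <= 1/2) by (unfold de; apply Rmin_l).
  assert (H3 : de * (4 * (X + Y + Rabs Z + 1)) <= e).
  { assert (de <= e / (4 * (X + Y + Rabs Z + 1))) by (unfold de; apply Rmin_r).
    apply (Rmult_le_compat_r (4 * (X + Y + Rabs Z + 1))) in H0; [|lra].
    replace (e / (4 * (X + Y + Rabs Z + 1)) * (4 * (X + Y + Rabs Z + 1))) with e in H0 by (field; lra). lra. }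
  set (r := 1 - de). specialize (H r ltac:(unfold r; lra)).
  assert (Hr4 : 1 - r ^ 4 <= 4 * de) by (unfold r; simpl; nra).
  assert (Hr2 : 1 - r ^ 2 <= 4 * de) by (unfold r; simpl; nra).
  assert (Hr2' : 1 - r ^ 2 >= 0) by (unfold r; simpl; nra).
  assert (Hr4' : 1 - r ^ 4 >= 0) by (unfold r; simpl; nra).
  assert (Z * r ^ 2 <= Z * 1 + Rabs Z * (1 - r ^ 2)).
  { pose proof (Rle_abs Z). pose proof (Rle_abs (- Z)). rewrite Rabs_Ropp in H4. nra. }
  assert (X * (1 - r ^ 2) <= X * (4 * de)) by nra.
  assert (Y * (1 - r ^ 4) <= Y * (4 * de)) by nra.
  assert (Rabs Z * (1 - r ^ 2) <= Rabs Z * (4 * de)) by (pose proof (Rabs_pos Z); nra).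
  nra.
Qed.

Lemma final_real u v : 0 <= u -> 0 <= v ->
  (forall t, 0 <= t -> u ^ 2 + (v * (1 + t * u ^ 2)) ^ 2 <= 1 + (t * v * u) ^ 2) -> v <= 1 - u ^ 2.
Proof.
  intros Hu Hv H. pose proof (H 0 ltac:(lra)) as H0.
  set (w := u ^ 2) in *.
  assert (Hw : 0 <= w) by (unfold w; apply pow2_ge_0).
  destruct (Req_dec w 1) as [E|E].
  - rewrite E. simpl in H0. replace (u * (u * 1)) with w in H0 by (unfold w; simpl; ring). nra.
  - assert (Hw1 : w < 1) by (simpl in H0; replace (u * (u * 1)) with w in H0 by (unfold w; simpl; ring); nra).
    set (t := / (1 - w)). assert (Ht : 0 < t) by (unfold t; apply Rinv_0_lt_compat; lra).
    specialize (H t ltac:(lra)). fold w in H.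
    replace (1 + t * w) with t in H by (unfold t; field; lra).
    replace ((t * v * u) ^ 2) with (t ^ 2 * v ^ 2 * w) in H by (unfold w; ring).
    assert (Ht1 : t * (1 - w) = 1) by (unfold t; field; lra).
    assert (v ^ 2 * t ^ 2 * (1 - w) <= 1 - w) by nra.
    assert (v ^ 2 * t ^ 2 <= 1).
    { apply (Rmult_le_reg_r (1 - w)); lra. }
    assert (v * t <= 1) by nra.
    replace (1 - w) with ((1 - w) * 1) by ring. 
    assert (v = v * t * (1 - w)) by (rewrite Rmult_assoc, Ht1; ring).
    nra.
Qed.

Lemma schwarz2 (c : nat -> C) (om : C -> C) : ps_on_disk c om -> c 0%nat = RtoC 0 ->
  (forall z, Cmod z < 1 -> Cmod (om z) < 1) -> Cmod (c 2%nat) <= 1 - Cmod (c 1%nat) ^ 2.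
Proof.
  intros Hps Hc0 Hom.
  assert (Hall : forall p : C, Cmod (c 1%nat) ^ 2 + Cmod (c 2%nat + p * c 1%nat)%C ^ 2 <= 1 + Cmod p ^ 2 * 1).
  { intros p. apply lim_r; try apply pow2_ge_0. intros r Hr.
    apply lim_eps. pose proof (pow2_ge_0 (Cmod p)). pose proof (pow2_ge_0 r). nra.
    intros eps Heps. apply (schwarz_approx c om Hps Hc0 Hom p r eps Hr Heps). }
  apply final_real; try apply Cmod_ge_0. intros t Ht.
  specialize (Hall (RtoC t * c 2%nat * Cconj (c 1%nat))%C).
  replace (c 2%nat + RtoC t * c 2%nat * Cconj (c 1%nat) * c 1%nat)%C with
    (c 2%nat * (1 + RtoC t * (c 1%nat * Cconj (c 1%nat))))%C in Hall by ring.
  rewrite <- RtoC_Cmod2 in Hall. rewrite <- RtoC_mult, <- RtoC_plus in Hall.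
  rewrite !Cmod_mult, Cmod_conj, !Cmod_R in Hall.
  rewrite (Rabs_right t) in Hall by lra.
  rewrite (Rabs_right (1 + t * Cmod (c 1%nat) ^ 2)) in Hall
    by (pose proof (pow2_ge_0 (Cmod (c 1%nat))); nra).
  rewrite Rmult_1_r in Hall. exact Hall.
Qed.

Lemma side_eqs lam (a c B : nat -> C) (g g' phi om : C -> C) :
  ps_on_disk a g -> a 0%nat = RtoC 0 -> (forall z, Cmod z < 1 -> C_deriv_at g z (g' z)) ->
  ps_on_disk B phi -> B 0%nat = RtoC 1 -> ps_on_disk c om -> c 0%nat = RtoC 0 ->
  (forall z, Cmod z < 1 -> Rlam_op lam g g' z = phi (om z)) ->
  (RtoC (1 + lam) * a 2%nat = B 1%nat * c 1%nat)%C /\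
  (RtoC (1 + 2 * lam) * a 3%nat = B 1%nat * c 2%nat + B 2%nat * c 1%nat ^ 2)%C.
Proof.
  intros Ha Ha0 Hd HB HB0 Hc Hc0 Heq.
  pose proof (rlam_exp lam a g g' Ha Ha0 Hd) as H1.
  pose proof (comp_exp B c phi om HB Hc Hc0 HB0) as H2.
  pose proof (bigO_sub 3 _ _ H1 H2) as H3.
  assert (H4 : bigO 3 (fun z => (RtoC 1 - a 1%nat) + (B 1%nat * c 1%nat - RtoC (1 + lam) * a 2%nat) * z
      + (B 1%nat * c 2%nat + B 2%nat * c 1%nat ^ 2 - RtoC (1 + 2 * lam) * a 3%nat) * z ^ 2)%C).
  { refine (bigO_ext 3 _ _ 1 ltac:(lra) _ H3). intros z Hz. simpl. rewrite (Heq z Hz). ring. }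
  destruct (uniq2 _ _ _ H4) as [_ [E1 E2]]. split.
  - replace (RtoC (1 + lam) * a 2%nat)%C with
      (B 1%nat * c 1%nat - (B 1%nat * c 1%nat - RtoC (1 + lam) * a 2%nat))%C by ring.
    rewrite E1. ring.
  - replace (RtoC (1 + 2 * lam) * a 3%nat)%C with
      (B 1%nat * c 2%nat + B 2%nat * c 1%nat ^ 2 -
       (B 1%nat * c 2%nat + B 2%nat * c 1%nat ^ 2 - RtoC (1 + 2 * lam) * a 3%nat))%C by ring.
    rewrite E2. ring.
Qed.

Theorem theorem1 (lam : R) (Hlam : 0 <= lam)
  (phi : Cx -> Cx) (B : nat -> Cx)
  (Hphi : ps_on_disk B phi) (HB0 : B O = Cx1)
  (HB1 : snd (B 1%nat) = 0 /\ fst (B 1%nat) > 0) (HB2 : snd (B 2%nat) = 0)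
  (a : nat -> Cx) (f F f' F' : Cx -> Cx)
  (Hsig : bi_univalent_with_inverse a f F)
  (Hf' : forall z, Cmod z < 1 -> C_deriv_at f z (f' z))
  (HF' : forall w, Cmod w < 1 -> C_deriv_at F w (F' w))
  (Hsubf : subordinate (Rlam_op lam f f') phi)
  (HsubF : subordinate (Rlam_op lam F F') phi) :
  Cmod (a 2%nat) <=
  sqrt ((fst (B 1%nat) + Rabs (fst (B 1%nat) - fst (B 2%nat))) / (1 + 2 * lam)).
Proof.
  destruct Hsig as [[Hfa [Ha0 Ha1]] [[_ Hfinj] [[[A HFA] _] [r0 [Hr0 Hinv]]]]].
  destruct Hsubf as [om [[c Hc] [Hom0 [Hom1 Heqf]]]].
  destruct HsubF as [nu [[d Hd] [Hnu0 [Hnu1 HeqF]]]].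
  rewrite e_zero in Ha0. rewrite e_one in Ha1. rewrite e_one in HB0. rewrite e_zero in Hom0, Hnu0.
  assert (Hc0 : c 0%nat = RtoC 0) by (rewrite <- (ps_at0 c om Hc); auto).
  assert (Hd0 : d 0%nat = RtoC 0) by (rewrite <- (ps_at0 d nu Hd); auto).
  assert (HF0 : F (RtoC 0) = RtoC 0).
  { destruct (Hinv (RtoC 0) ltac:(rewrite e_mod, Cmod_0; lra)) as [H1 H2].
    apply Hfinj; auto. rewrite e_mod, Cmod_0; lra.
    rewrite H2. rewrite (ps_at0 a f Hfa). rewrite Ha0. reflexivity. }
  assert (HA0 : A 0%nat = RtoC 0) by (rewrite <- (ps_at0 A F HFA); auto).
  destruct (F_coefs a A f F r0 Hfa Ha0 Ha1 HFA HA0 Hr0) as [HA1 [HA2 HA3]].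
  { intros w Hw. apply (Hinv w). rewrite e_mod; auto. }
  destruct (side_eqs lam a c B f f' phi om Hfa Ha0 Hf' Hphi HB0 Hc Hc0) as [Q1 Q2].
  { intros z Hz. apply Heqf. rewrite e_mod; auto. }
  destruct (side_eqs lam A d B F F' phi nu HFA HA0 HF' Hphi HB0 Hd Hd0) as [Q3 Q4].
  { intros z Hz. apply HeqF. rewrite e_mod; auto. }
  pose proof (schwarz2 c om Hc Hc0 ltac:(intros; rewrite <- e_mod; apply Hom1; rewrite e_mod; auto)) as S1.
  pose proof (schwarz2 d nu Hd Hd0 ltac:(intros; rewrite <- e_mod; apply Hnu1; rewrite e_mod; auto)) as S2.
  rewrite HA2 in Q3. rewrite HA3 in Q4.
  set (b1 := fst (B 1%nat)) in *. set (b2 := fst (B 2%nat)) in *.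
  destruct HB1 as [HB1s HB1p].
  assert (EB1 : B 1%nat = RtoC b1) by (unfold b1, RtoC; rewrite <- HB1s; destruct (B 1%nat); auto).
  assert (EB2 : B 2%nat = RtoC b2) by (unfold b2, RtoC; rewrite <- HB2; destruct (B 2%nat); auto).
  rewrite EB1, EB2 in *.
  assert (Ed1 : d 1%nat = (- c 1%nat)%C).
  { assert (Hb1 : RtoC b1 <> RtoC 0) by (intro HH; injection HH; lra).
    assert (HH : (RtoC b1 * d 1%nat = RtoC b1 * - c 1%nat)%C).
    { rewrite <- Q3. replace (RtoC b1 * - c 1%nat)%C with (- (RtoC b1 * c 1%nat))%C by ring.
      rewrite <- Q1. ring. }
    replace (d 1%nat) with (/ RtoC b1 * (RtoC b1 * d 1%nat))%C by (ceq; field; auto).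
    rewrite HH. ceq; field; auto. }
  rewrite Ed1 in Q4, S2. rewrite Cmod_opp in S2.
  assert (Key : (RtoC (2 * (1 + 2 * lam)) * a 2%nat ^ 2 =
                 RtoC b1 * (c 2%nat + d 2%nat) + RtoC (2 * b2) * c 1%nat ^ 2)%C).
  { rewrite !RtoC_mult. 
    replace (RtoC 2 * RtoC (1 + 2 * lam) * a 2%nat ^ 2)%C with
      (RtoC (1 + 2 * lam) * a 3%nat + RtoC (1 + 2 * lam) * (2 * a 2%nat ^ 2 - a 3%nat))%C.
    2:{ ring. }
    rewrite Q2, Q4. ring. }
  apply (f_equal Cmod) in Key.
  rewrite Cmod_mult, Cmod_pow, Cmod_R, Rabs_right in Key by lra.
  assert (Hle : Cmod (RtoC b1 * (c 2%nat + d 2%nat) + RtoC (2 * b2) * c 1%nat ^ 2)%C <=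
                b1 * (Cmod (c 2%nat) + Cmod (d 2%nat)) + 2 * Rabs b2 * Cmod (c 1%nat) ^ 2).
  { eapply Rle_trans. apply Cmod_triangle. rewrite !Cmod_mult, !Cmod_R, Cmod_pow, Rabs_mult.
    rewrite (Rabs_right b1) by lra. rewrite (Rabs_right 2) by lra.
    apply Rplus_le_compat_r. apply Rmult_le_compat_l; [lra|]. apply Cmod_triangle. }
  rewrite <- Key in Hle.
  set (u := Cmod (c 1%nat)) in *. set (x := Cmod (a 2%nat)) in *.
  pose proof (Cmod_ge_0 (c 2%nat)). pose proof (Cmod_ge_0 (d 2%nat)).
  assert (Hu : u ^ 2 <= 1) by lra.
  assert (Hfin : (1 + 2 * lam) * x ^ 2 <= b1 + Rabs (b1 - b2)).
  { assert (2 * (1 + 2 * lam) * x ^ 2 <= 2 * (b1 * (1 - u ^ 2) + Rabs b2 * u ^ 2)) by nra.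
    assert (Rabs b2 - b1 <= Rabs (b1 - b2)).
    { pose proof (Rabs_triang (b2 - b1) b1). replace (b2 - b1 + b1) with b2 in H2 by ring.
      rewrite Rabs_minus_sym in H2. rewrite (Rabs_right b1) in H2 by lra. lra. }
    pose proof (Rabs_pos (b1 - b2)). pose proof (pow2_ge_0 u).
    destruct (Rle_dec (Rabs b2 - b1) 0); nra. }
  unfold x. rewrite <- (sqrt_pow2 (Cmod (a 2%nat))) by apply Cmod_ge_0.
  apply sqrt_le_1_alt. apply (Rmult_le_reg_l (1 + 2 * lam)); [lra|].
  replace ((1 + 2 * lam) * ((b1 + Rabs (b1 - b2)) / (1 + 2 * lam))) with (b1 + Rabs (b1 - b2))
    by (field; lra).
  exact Hfin.
Qed.
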